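(* Let $A$ be an $n\times n$ Bott matrix, $\Gamma=\pi_1(M(A))$, and let $b_1$ be the first Betti number of $M(A)$. Let $S=\operatorname{span}_{\mathbb{F}_2}\{x_j^2:1\le j\le n\}\subseteq H^2(\Gamma,\mathbb{F}_2)$. Then $\dim_{\mathbb{F}_2}S=n-b_1$ and $S\subseteq\ker\beta^{(2)}$.
   Context: A Bott matrix is a strictly upper triangular $A=[a_{ij}]\in\mathbb{F}_2^{n\times n}$. The real Bott manifold is $M(A)=T^n/C_2^n$, where $C_2^n=\langle c_1,\dots,c_n\rangle$ acts freely on $T^n=(S^1)^n\subset\mathbb{C}^n$ by $$c_i\cdot(z_1,\dots,z_n)=(z_1,\dots,z_{i-1},-z_i,c_{i,i+1}(z_{i+1}),\dots,c_{i,n}(z_n)),$$ with $c_{i,j}(z)=z$ if $a_{ij}=0$ and $\bar z$ if $a_{ij}=1$. Let $\pi\colon\Gamma\to C_2^n$ be the induced surjection (kernel $\mathbb{Z}^n$). Let $c_i^*\in\operatorname{Hom}(C_2^n,\mathbb{F}_2)$ satisfy $c_i^*(c_j)=\delta_{ij}$, and put $x_i=\pi^*(c_i^* )\in H^1(\Gamma,\mathbb{F}_2)$. It is known that $H^*(\Gamma,\mathbb{F}_2)\cong\mathbb{F}_2[x_1,\dots,x_n]/(x_j^2+\alpha_jx_j:1\le j\le n)$ with $\alpha_j=\sum_{i=1}^{j-1}a_{ij}x_i$, and that $\{x_ix_j:i<j\}$ is a basis of $H^2(\Gamma,\mathbb{F}_2)$. Here $\beta^{(2)}\colon H^2(\Gamma,\mathbb{F}_2)\to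 H^3(\Gamma,\mathbb{F}_2)$ is the Bockstein homomorphism of $0\to\mathbb{F}_2\to\mathbb{Z}/4\to\mathbb{F}_2\to0$. *)

(* Defs.v *)
From HB Require Import structures.
From mathcomp Require Import all_boot all_order all_algebra.
Set Implicit Arguments. Unset Strict Implicit. Unset Printing Implicit Defensive.
Import Order.TTheory GRing.Theory Num.Theory.
Local Open Scope ring_scope.

Definition bott_matrix (n : nat) (A : 'M['F_2]_n) : Prop :=
  forall i j : 'I_n, (j <= i)%N -> A i j = 0.

(* The group Gamma = pi_1(M(A)) realised as the deck-transformation group of
   R^n -> T^n -> M(A) (with z_j = exp(2 pi i t_j)):  Gamma consists of the affine
   maps  t |-> D_w t + w/2  for w in Z^n, where D_w is diagonal with
   (D_w)_jj = (-1)^(sum_i a_ij w_i).  The element is encoded by w. *)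
Definition Gam (n : nat) := {ffun 'I_n -> int}.

Definition xcls (n : nat) (i : 'I_n) (w : Gam n) : 'F_2 := (w i)%:~R.

Definition eps (n : nat) (A : 'M['F_2]_n) (w : Gam n) (j : 'I_n) : 'F_2 :=
  \sum_(i < n) A i j * xcls i w.

(* composition of affine maps: (D_w t + w/2) o (D_w' t + w'/2) *)
Definition gmul (n : nat) (A : 'M['F_2]_n) (w w' : Gam n) : Gam n :=
  [ffun j => w j + (if eps A w j == 0 then w' j else - w' j)].

Definition is_cobound2 (n : nat) (A : 'M['F_2]_n) (f : Gam n -> Gam n -> 'F_2) :=
  exists h : Gam n -> 'F_2, forall a b, f a b = h b - h (gmul A a b) + h a.

Definition is_cobound3 (n : nat) (A : 'M['F_2]_n)
    (f : Gam n -> Gam n -> Gam n -> 'F_2) :=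
  exists h : Gam n -> Gam n -> 'F_2, forall a b c,
    f a b c = h b c - h (gmul A a b) c + h a (gmul A b c) - h a b.

(* Bockstein for 0 -> F_2 -> Z/4 -> F_2 -> 0 : lift a 2-cocycle to Z/4 via the
   set-theoretic section, take the coboundary (values in 2Z/4), divide by 2. *)
Definition lift4 (x : 'F_2) : 'Z_4 := (val x)%:R.
Definition half4 (y : 'Z_4) : 'F_2 := ((val y) %/ 2)%:R.

Definition bockstein_cochain (n : nat) (A : 'M['F_2]_n)
    (f : Gam n -> Gam n -> 'F_2) : Gam n -> Gam n -> Gam n -> 'F_2 :=
  fun a b c => half4 (lift4 (f b c) - lift4 (f (gmul A a b) c)
                      + lift4 (f a (gmul A b c)) - lift4 (f a b)).

Definition bockstein_vanishes (n : nat) (A : 'M['F_2]_n)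
    (f : Gam n -> Gam n -> 'F_2) : Prop :=
  is_cobound3 A (bockstein_cochain A f).

Definition xsq (n : nat) (j : 'I_n) : Gam n -> Gam n -> 'F_2 :=
  fun g h => xcls j g * xcls j h.

Definition combo (n : nat) (c : 'I_n -> 'F_2) : Gam n -> Gam n -> 'F_2 :=
  fun g h => \sum_(j < n) c j * xsq j g h.

Definition sq_indep (n : nat) (A : 'M['F_2]_n) (J : {set 'I_n}) : Prop :=
  forall c : 'I_n -> 'F_2, (forall j, j \notin J -> c j = 0) ->
    is_cobound2 A (combo c) -> forall j, c j = 0.

Definition sq_span_dim (n : nat) (A : 'M['F_2]_n) (d : nat) : Prop :=
  (exists J : {set 'I_n}, #|J| = d /\ sq_indep A J) /\
  (forall J : {set 'I_n}, sq_indep A J -> (#|J| <= d)%N).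

(* first Betti number: b_1 = dim_Q H^1(Gamma; Q) = dim_Q Hom(Gamma, Q) *)
Definition is_hom_Q (n : nat) (A : 'M['F_2]_n) (phi : Gam n -> rat) : Prop :=
  forall a b, phi (gmul A a b) = phi a + phi b.

Definition Q_indep (n m : nat) (phi : 'I_m -> Gam n -> rat) : Prop :=
  forall c : 'I_m -> rat, (forall g, \sum_(i < m) c i * phi i g = 0) ->
    forall i, c i = 0.

Definition is_betti1 (n : nat) (A : 'M['F_2]_n) (b : nat) : Prop :=
  (exists phi : 'I_b -> Gam n -> rat, (forall i, is_hom_Q A (phi i)) /\ Q_indep phi) /\
  (forall phi : 'I_b.+1 -> Gam n -> rat, (forall i, is_hom_Q A (phi i)) -> ~ Q_indep phi).

(* Main.v *)
Require Import Defs.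
From mathcomp Require Import all_boot all_order all_algebra.
From mathcomp Require Import ring lra.
Import GRing.Theory.
Set Implicit Arguments. Unset Strict Implicit.
Local Open Scope ring_scope.

Definition red4 (y : 'Z_4) : 'F_2 := (val y)%:R.

Lemma half4D (p q : 'Z_4) : half4 (p+q) = half4 p + half4 q + red4 p * red4 q.
Proof.
case: p => [[|[|[|[|m]]]] Hp] //; case: q => [[|[|[|[|k]]]] Hq] //; apply/val_inj => /=.
all: reflexivity.
Qed.

Lemma lift4_coc (p q r : 'F_2) :
  lift4 (q*r) - lift4 ((p+q)*r) + lift4 (p*(q+r)) - lift4 (p*q) = 0.
Proof.
case: p => [[|[|m]] Hp] //; case: q => [[|[|k]] Hq] //; case: r => [[|[|l]] Hr] //;
apply/val_inj => /=; reflexivity.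
Qed.

Lemma oppF2 (x : 'F_2) : - x = x.
Proof. case: x => [[|[|m]] Hp] //; apply/val_inj => /=; reflexivity. Qed.

Lemma two_F2 : 2%:R = 0 :> 'F_2.
Proof. apply/val_inj => /=; reflexivity. Qed.

Lemma red4D (p q : 'Z_4) : red4 (p + q) = red4 p + red4 q.
Proof.
case: p => [[|[|[|[|m]]]] Hp] //; case: q => [[|[|[|[|k]]]] Hq] //; apply/val_inj => /=.
all: reflexivity.
Qed.

Lemma red4M (p q : 'Z_4) : red4 (p * q) = red4 p * red4 q.
Proof.
case: p => [[|[|[|[|m]]]] Hp] //; case: q => [[|[|[|[|k]]]] Hq] //; apply/val_inj => /=.
all: reflexivity.
Qed.

Lemma red4N (p : 'Z_4) : red4 (- p) = - red4 p.
Proof.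
case: p => [[|[|[|[|m]]]] Hp] //; apply/val_inj => /=; reflexivity.
Qed.

Lemma red40 : red4 0 = 0. Proof. apply/val_inj => /=; reflexivity. Qed.
Lemma red41 : red4 1 = 1. Proof. apply/val_inj => /=; reflexivity. Qed.

Lemma red4_lift (x : 'F_2) : red4 (lift4 x) = x.
Proof. case: x => [[|[|m]] Hp] //; apply/val_inj => /=; reflexivity. Qed.

Lemma red4_split (y : 'Z_4) : red4 y = 0 -> y = lift4 (half4 y) *+ 2.
Proof.
case: y => [[|[|[|[|m]]]] Hp] //= H; apply/val_inj => //=; move: H => /(congr1 val) //=.
Qed.

Lemma half4_lift (u v w z : 'F_2) :
  half4 ((lift4 u - lift4 v + lift4 w - lift4 z) *+ 2) = u - v + w - z.
Proof.
case: u => [[|[|m1]] H1] //; case: v => [[|[|m2]] H2] //;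
case: w => [[|[|m3]] H3] //; case: z => [[|[|m4]] H4] //;
apply/val_inj => /=; reflexivity.
Qed.

Lemma red4_int (z : int) : red4 (z%:~R) = z%:~R.
Proof.
have Hn : forall m : nat, red4 (m%:R) = m%:R.
  elim=> [|m IH]; first exact: red40.
  by rewrite mulrS red4D red41 IH -mulrS.
case: z => m; first by rewrite -!pmulrn Hn.
by rewrite NegzE !intrN red4N -!pmulrn Hn.
Qed.

Section G.
Variables (n : nat) (A : 'M['F_2]_n).

Lemma xcls_mul (a b : Gam n) j : xcls j (gmul A a b) = xcls j a + xcls j b.
Proof.
rewrite /xcls ffunE intrD; case: eqP => _ //.
by rewrite intrN oppF2.
Qed.

Definition Fj (j : 'I_n) (a b : Gam n) : 'Z_4 := lift4 (xsq j a b).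

Lemma Fj_coc j a b c :
  Fj j b c - Fj j (gmul A a b) c + Fj j a (gmul A b c) - Fj j a b = 0.
Proof. by rewrite /Fj /xsq !xcls_mul lift4_coc. Qed.

Lemma bock (c : 'I_n -> 'F_2) : bockstein_vanishes A (combo c).
Proof.
pose G a b := \sum_(j < n) lift4 (c j) * Fj j a b.
have GC : forall a b d, G b d - G (gmul A a b) d + G a (gmul A b d) - G a b = 0.
  move=> a b d; rewrite /G -sumrB -big_split -sumrB /=.
  apply: big1 => j _.
  by rewrite -!mulrBr -mulrDr -mulrBr Fj_coc mulr0.
have redG : forall a b, red4 (G a b) = combo c a b.
  move=> a b; rewrite /G /combo (big_morph red4 red4D red40).
  by apply: eq_bigr => j _; rewrite red4M red4_lift /Fj red4_lift.
pose e a b := half4 (lift4 (combo c a b) - G a b).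
have Le : forall a b, lift4 (combo c a b) = G a b + lift4 (e a b) *+ 2.
  move=> a b; rewrite /e -red4_split; first by rewrite addrC subrK.
  by rewrite red4D red4N red4_lift redG subrr.
exists e => a b d.
rewrite /bockstein_cochain !Le.
have -> : G b d + lift4 (e b d) *+ 2 - (G (gmul A a b) d + lift4 (e (gmul A a b) d) *+ 2)
  + (G a (gmul A b d) + lift4 (e a (gmul A b d)) *+ 2) - (G a b + lift4 (e a b) *+ 2)
  = (G b d - G (gmul A a b) d + G a (gmul A b d) - G a b)
    + (lift4 (e b d) - lift4 (e (gmul A a b) d) + lift4 (e a (gmul A b d)) - lift4 (e a b)) *+ 2.
  by rewrite !mulr2n; ring.
by rewrite GC add0r half4_lift.
Qed.
End G.

Section H.
Variables (n : nat) (A : 'M['F_2]_n).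
Hypothesis bA : bott_matrix A.

Definition E (k : 'I_n) (t : int) : Gam n := [ffun l => if l == k then t else 0].
Definition z0 : Gam n := [ffun _ => 0].

Lemma xcls_E k t i : xcls i (E k t) = (if i == k then t else 0)%:~R.
Proof. by rewrite /xcls ffunE. Qed.

Lemma eps_E k t j : eps A (E k t) j = A k j * t%:~R.
Proof.
rewrite /eps (bigD1 k) //= big1 ?addr0; first by rewrite xcls_E eqxx.
by move=> i /negPf ne; rewrite xcls_E ne mulr0.
Qed.

Lemma Akk k : A k k = 0.
Proof. by apply: bA. Qed.

Lemma gmul_EE k t s : gmul A (E k t) (E k s) = E k (t + s).
Proof.
apply/ffunP => l; rewrite !ffunE eps_E.
case: (eqVneq l k) => [->|ne]; first by rewrite Akk mul0r eqxx.
by rewrite oppr0 add0r; case: ifP.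
Qed.

Lemma E0 k : E k 0 = z0.
Proof. by apply/ffunP => l; rewrite !ffunE; case: ifP. Qed.

Lemma gmul00 : gmul A z0 z0 = z0.
Proof. by apply/ffunP => l; rewrite !ffunE oppr0 add0r; case: ifP. Qed.

Definition nzcol (k : 'I_n) := exists i, A i k != 0.

Lemma eps_zcol k w : ~ nzcol k -> eps A w k = 0.
Proof.
move=> H; apply: big1 => i _.
case: (eqVneq (A i k) 0) => [->|ne]; first by rewrite mul0r.
by case: H; exists i.
Qed.

Variable phi : Gam n -> rat.
Hypothesis hphi : is_hom_Q A phi.

Lemma phi0 : phi z0 = 0.
Proof. have := hphi z0 z0; rewrite gmul00 => H; lra. Qed.

Lemma phiE k t : phi (E k t) = t%:~R * phi (E k 1).
Proof.
have Hn : forall m : nat, phi (E k m) = m%:R * phi (E k 1).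
  elim=> [|m IH]; first by rewrite E0 phi0 mul0r.
  have -> : E k m.+1 = gmul A (E k m) (E k 1) by rewrite gmul_EE -PoszD addn1.
  by rewrite hphi IH mulrS mulrDl mul1r addrC.
case: t => m; first by rewrite Hn -pmulrn.
have H := hphi (E k (Negz m)) (E k (m.+1)).
rewrite gmul_EE NegzE addNr E0 phi0 Hn in H.
rewrite NegzE intrN -pmulrn; lra.
Qed.

Lemma phi_nzcol k : nzcol k -> phi (E k 1) = 0.
Proof.
case=> i Aik.
have lik : (i < k)%N by rewrite ltnNge; apply/negP => H; move: Aik; rewrite bA.
have ne : k != i by rewrite neq_ltn lik orbT.
have Eq : gmul A (E i 1) (E k (-1)) = gmul A (E k 1) (E i 1).
  apply/ffunP => l; rewrite !ffunE !eps_E.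
  case: (eqVneq l i) => [->|nli].
    rewrite (eq_sym i k) (negPf ne) oppr0 (Akk i) (@bA k i (ltnW lik)) !mul0r eqxx add0r.
    by rewrite addr0.
  case: (eqVneq l k) => [->|nlk].
    rewrite Akk mul0r eqxx mulr1z mulr1 (negPf Aik) opprK.
    by rewrite add0r addr0.
  by rewrite oppr0; case: ifP; case: ifP.
have := congr1 phi Eq; rewrite !hphi (phiE k (-1)) => H.
move: H; rewrite intrN mulN1r => H; lra.
Qed.

Definition trunc (w : Gam n) (m : nat) : Gam n :=
  [ffun l : 'I_n => if (l < m)%N then w l else 0].

Lemma phi_decomp w : phi w = \sum_(k < n) (w k)%:~R * phi (E k 1).
Proof.
have H : forall m, (m <= n)%N -> phi (trunc w m) =
   \sum_(k < n) (if (k < m)%N then (w k)%:~R * phi (E k 1) else 0).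
  elim=> [_|m IH lmn].
    rewrite big1 //; have -> : trunc w 0 = z0 by apply/ffunP => l; rewrite !ffunE.
    exact: phi0.
  pose k0 := Ordinal lmn.
  pose s : int := if eps A (trunc w m) k0 == 0 then 1 else -1.
  have Tr : trunc w m.+1 = gmul A (trunc w m) (E k0 (s * w k0)).
    apply/ffunP => l; rewrite !ffunE.
    case: (eqVneq l k0) => [->|ne].
      have h1 : (k0 < m.+1)%N by exact: ltnSn.
      have h2 : (k0 < m)%N = false by exact: ltnn.
      rewrite h1 h2 add0r /s; case: (eps A (trunc w m) k0 =P 0) => _; first by rewrite mul1r.
      by rewrite mulN1r opprK.
    have -> : (l < m.+1)%N = (l < m)%N.
      rewrite ltnS leq_eqVlt; suff -> : (val l == m) = false by [].
      by apply/negP => /eqP H; move: ne; rewrite -(inj_eq val_inj) /= H eqxx.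
    by rewrite oppr0 if_same addr0.
  rewrite Tr hphi IH 1?ltnW // phiE.
  have S2 : \sum_(k < n) (if (k < m)%N then (w k)%:~R * phi (E k 1) else 0)
     = \sum_(k < n | k != k0) (if (k < m)%N then (w k)%:~R * phi (E k 1) else 0).
    by rewrite (bigD1 k0) //= ltnn add0r.
  have S1 : \sum_(k < n) (if (k < m.+1)%N then (w k)%:~R * phi (E k 1) else 0)
     = (w k0)%:~R * phi (E k0 1) +
       \sum_(k < n | k != k0) (if (k < m)%N then (w k)%:~R * phi (E k 1) else 0).
    rewrite (bigD1 k0) //= ltnSn; congr (_ + _).
    apply: eq_bigr => k ne; rewrite ltnS leq_eqVlt.
    suff -> : (val k == m) = false by [].
    by apply/negP => /eqP H; move: ne; rewrite -(inj_eq val_inj) /= H eqxx.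
  rewrite S1 S2 addrC; congr (_ + _).
  rewrite /s; case: ifP => [_|Hs]; first by rewrite mul1r.
  have nz : nzcol k0.
    case: (boolP [exists i, A i k0 != 0]) => [/existsP //|/existsPn H0].
    move: Hs; rewrite eps_zcol ?eqxx //; case=> i; by rewrite (negPn (H0 i)).
  by rewrite phi_nzcol // !mulr0.
have -> : w = trunc w n by apply/ffunP => l; rewrite ffunE ltn_ord.
rewrite H //; apply: eq_bigr => k _; rewrite ltn_ord.
by rewrite /trunc ffunE ltn_ord.
Qed.

End H.

Section K.
Variables (n : nat) (A : 'M['F_2]_n).
Hypothesis bA : bott_matrix A.

Definition Zs : {set 'I_n} := [set k | [forall i, A i k == 0]].

Lemma Zs_nz k : k \notin Zs -> nzcol A k.
Proof.
rewrite inE => /forallPn [i Hi]; by exists i.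
Qed.

Lemma Zs_z k : k \in Zs -> ~ nzcol A k.
Proof. rewrite inE => /forallP H [i]; by rewrite (H i). Qed.

Lemma coord_hom k : k \in Zs -> is_hom_Q A (fun w => ((w k)%:~R : rat)).
Proof.
move=> kZ a b; rewrite /gmul ffunE eps_zcol ?eqxx ?intrD //.
exact: Zs_z.
Qed.

Lemma betti_le b (phi : 'I_b -> Gam n -> rat) :
  (forall i, is_hom_Q A (phi i)) -> Q_indep phi -> (b <= #|Zs|)%N.
Proof.
move=> hom ind; rewrite leqNgt; apply/negP => lt.
pose M : 'M[rat]_(b, #|Zs|) := \matrix_(i, l) phi i (E (enum_val l) 1).
have nf : ~~ row_free M.
  rewrite /row_free; apply/negP => /eqP H.
  by move: (rank_leq_col M); rewrite H leqNgt lt.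
move: nf; rewrite -kermx_eq0 => /negP nz.
have [r [j Hrj]] : exists r j, kermx M r j != 0.
  case: (boolP [exists r, exists j, kermx M r j != 0]) => [/existsP [r /existsP [j H]]|/existsPn H].
    by exists r, j.
  exfalso; apply: nz; apply/eqP/matrixP => r j; rewrite [RHS]mxE.
  by move: (H r) => /existsPn /(_ j) /negPn /eqP.
pose c i := kermx M r i.
have K : forall g, \sum_(i < b) c i * phi i g = 0.
  move=> g.
  under eq_bigr => i _ do rewrite (phi_decomp bA (hom i)) mulr_sumr.
  rewrite exchange_big /=; apply: big1 => k _.
  case: (boolP (k \in Zs)) => kZ.
    pose l : 'I_#|Zs| := enum_rank_in kZ k.
    have el : enum_val l = k by rewrite /l enum_rankK_in.
    have H : (kermx M *m M) r l = 0 by rewrite mulmx_ker mxE.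
    move: H; rewrite mxE => H.
    transitivity (((g k)%:~R : rat) * \sum_(i < b) kermx M r i * M i l); last by rewrite H mulr0.
    rewrite mulr_sumr; apply: eq_bigr => i _.
    have HM : M i l = phi i (E k 1) by rewrite /M mxE el.
    rewrite HM /c; ring.
  apply: big1 => i _; rewrite (phi_nzcol bA (hom i)) ?mulr0 //.
  exact: Zs_nz.
by move: Hrj; have := ind c K j; rewrite /c => ->; rewrite eqxx.
Qed.

Lemma betti_ge b : (forall phi : 'I_b.+1 -> Gam n -> rat,
   (forall i, is_hom_Q A (phi i)) -> ~ Q_indep phi) -> (#|Zs| <= b)%N.
Proof.
move=> H; rewrite leqNgt; apply/negP => lt.
pose k (i : 'I_b.+1) : 'I_n := enum_val (widen_ord lt i).
pose phi i := fun w : Gam n => ((w (k i))%:~R : rat).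
apply: (H phi).
  by move=> i; apply: coord_hom; apply: enum_valP.
move=> c Hc i0.
have := Hc (E (k i0) 1); rewrite (bigD1 i0) //= big1 ?addr0.
  by rewrite /phi ffunE eqxx mulr1.
move=> i ne; rewrite /phi ffunE.
suff -> : (k i == k i0) = false by rewrite mulr0.
apply/negP => /eqP /enum_val_inj /(congr1 val) /= /val_inj E'.
by move: ne; rewrite E' eqxx.
Qed.

Lemma betti_eq b : is_betti1 A b -> b = #|Zs|.
Proof.
case=> [[phi [hom ind]] H]; apply/eqP; rewrite eqn_leq.
by rewrite (betti_le hom ind) (betti_ge H).
Qed.

Lemma combo_EE (c : 'I_n -> 'F_2) i s k t :
  combo c (E i s) (E k t) = if i == k then c i * (s%:~R * t%:~R) else 0.
Proof.
rewrite /combo (bigD1 i) //= big1 ?addr0.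
  rewrite /xsq !xcls_E.
  have -> : (i == i) = true by apply/eqP.
  case: (eqVneq i k) => [->|ne]; first by [].
  by rewrite mulr0z mulr0 mulr0.
by move=> j /negPf ne; rewrite /xsq !xcls_E ne mul0r mulr0.
Qed.

Lemma detect (c : 'I_n -> 'F_2) j : nzcol A j -> is_cobound2 A (combo c) -> c j = 0.
Proof.
case=> i Aij [h Hh].
have lij : (i < j)%N by rewrite ltnNge; apply/negP => H; move: Aij; rewrite bA.
have ne : i != j by rewrite neq_ltn lij.
have Eq : gmul A (E i 1) (E j 1) = gmul A (E j (-1)) (E i 1).
  apply/ffunP => l; rewrite !ffunE !eps_E.
  case: (eqVneq l i) => [->|nli].
    rewrite (negPf ne) oppr0 (Akk bA i) (@bA j i (ltnW lij)) !mul0r eqxx.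
    by rewrite add0r addr0.
  case: (eqVneq l j) => [->|nlj].
    rewrite (Akk bA j) mul0r eqxx mulr1z mulr1 (negPf Aij).
    by rewrite add0r addr0.
  by rewrite oppr0; case: ifP; case: ifP.
have Ez : gmul A (E j 1) (E j (-1)) = z0 n by rewrite gmul_EE // addrN E0.
have c00 : combo c (z0 n) (z0 n) = 0.
  by apply: big1 => k _; rewrite /xsq /xcls ffunE mul0r mulr0.
have e1 := Hh (E i 1) (E j 1).
have e2 := Hh (E j (-1)) (E i 1).
have e3 := Hh (E j 1) (E j (-1)).
have e4 := Hh (z0 n) (z0 n).
rewrite combo_EE (negPf ne) in e1.
rewrite combo_EE eq_sym (negPf ne) in e2.
rewrite combo_EE eqxx Ez in e3.
rewrite c00 gmul00 in e4.
rewrite Eq in e1.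
have : c j * (1%:~R * (-1)%:~R) = 0.
  rewrite e3.
  have : 0 + 0 + (h (E j (-1)) - h (z0 n) + h (E j 1)) + 0 = 
    (h (E j 1) - h (gmul A (E j (-1)) (E i 1)) + h (E i 1))
    + (h (E i 1) - h (gmul A (E j (-1)) (E i 1)) + h (E j (-1)))
    + (h (E j (-1)) - h (z0 n) + h (E j 1))
    + (h (z0 n) - h (z0 n) + h (z0 n)) by rewrite -e1 -e2 -e4.
  move=> H.
  have -> : h (E j (-1)) - h (z0 n) + h (E j 1) =
      (h (E j 1) + h (E i 1) - h (gmul A (E j (-1)) (E i 1)) + h (E j (-1))) * 2%:R.
    move: H; rewrite !add0r addr0 => H.
    have H2 : (h (E j (-1)) - h (z0 n) + h (E j 1)) * 2%:R =
      (h (E j 1) + h (E i 1) - h (gmul A (E j (-1)) (E i 1)) + h (E j (-1))) * 2%:R.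
      by rewrite two_F2 !mulr0.
    rewrite {1}H; ring.
  by rewrite two_F2 mulr0.
have -> : ((-1 : int)%:~R : 'F_2) = 1 by apply/val_inj.
by rewrite mulr1z !mulr1.
Qed.

End K.

Lemma zcol_cob n (A : 'M['F_2]_n) (j : 'I_n) :
  j \in Zs A -> is_cobound2 A (combo (fun k => (k == j)%:R)).
Proof.
move=> jZ.
exists (fun w : Gam n => half4 ((w j)%:~R : 'Z_4)) => a b.
have -> : combo (fun k => (k == j)%:R) a b = xcls j a * xcls j b.
  rewrite /combo (bigD1 j) //= big1 ?addr0.
    by rewrite eqxx mul1r.
  by move=> k /negPf ne; rewrite ne mul0r.
rewrite /gmul ffunE eps_zcol ?eqxx; last exact: Zs_z.
rewrite intrD half4D !red4_int.
rewrite /xcls.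

move: (half4 _) (half4 _) ((a j)%:~R : 'F_2) ((b j)%:~R : 'F_2) => u v x y.
have -> : v - (u + v + x * y) + u = - (x * y) by ring.
by rewrite oppF2.
Qed.

Unset Implicit Arguments.

Theorem mainTheorem8 (n : nat) (A : 'M['F_2]_n) (b1 : nat) :
  bott_matrix A -> is_betti1 A b1 ->
  sq_span_dim A (n - b1)%N /\
  (forall c : 'I_n -> 'F_2, bockstein_vanishes A (combo c)).
Proof.
move=> bA hb; split; last exact: bock.
have eb := betti_eq bA hb.
pose N := ~: Zs A.
have cN : (n - b1)%N = #|N|.
  by rewrite eb; have := cardsC (Zs A); rewrite card_ord => {1}<-; rewrite addKn.
rewrite cN; split.
  exists N; split => //.
  move=> c hc cob j.
  case: (boolP (j \in N)) => jN; last exact: hc.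
  apply: (detect bA) cob; apply: Zs_nz; by rewrite inE in jN.
move=> J indJ; apply: subset_leq_card; apply/subsetP => j jJ.
rewrite inE; apply/negP => jZ.
have := indJ (fun k => (k == j)%:R).
have H1 : forall k, k \notin J -> (k == j)%:R = 0 :> 'F_2.
  move=> k kJ; case: eqP => // E'; by move: kJ; rewrite E' jJ.
move=> /(_ H1 (zcol_cob jZ) j); rewrite eqxx => H.
by move: H; move/(congr1 val).
Qed.
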